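(* Let $G=(V,E)$ be a finite simple graph with at least one edge and no isolated vertices. Then $\lambda_{\max}(G)\ge 2\rho(G)^{-1}$, and $\lambda_{\max}(G)\ge 2\rho(A)^{-1}\frac{|A|}{|A|+|\delta(A)|}$ for all nonempty $A\subseteq E$. Moreover, if $G$ is uniformly dense, then $\lambda_{\max}(G|A)\ge 2\rho(G)^{-1}$ for all nonempty $A\subseteq E$.
   Context: $c(A)$ is the number of components of $(V,A)$, $\operatorname{rank}(A)=|V|-c(A)$, $\rho(A)=|A|/\operatorname{rank}(A)$, $\rho(G)=\rho(E)$; $G$ is uniformly dense if $\rho(A)\le\rho(G)$ for all nonempty $A\subseteq E$. $G|A$ is the graph obtained from $(V,A)$ by deleting isolated vertices, with vertex set $V|_A$. The normalized Laplacian $L(G)$ acts on $f:V\to\mathbb{R}$ by $Lf(v)=f(v)-\frac{1}{\deg v}\sum_{u:\{u,v\}\in E}f(u)$; its eigenvalues are real and nonnegative, and $\lambda_{\max}(G)$ (resp. $\lambda_{\max}(G|A)$) denotes the largest eigenvalue of $L(G)$ (resp. $L(G|A)$). The boundary of $A$ is $\delta(A)=\{e\in E\setminus A: \text{at least one endpoint of } e \text{ lies in } V|_A\}$. *)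

(* Defs.v *)
From HB Require Import structures.
From mathcomp Require Import all_boot all_order all_algebra.
From mathcomp Require Import reals.
Set Implicit Arguments. Unset Strict Implicit. Unset Printing Implicit Defensive.
Import Order.TTheory GRing.Theory Num.Theory.
Local Open Scope ring_scope.

(* A finite simple graph G = (V, E): V is a finType (the vertex set is all of V),
   E : {set {set V}} with every edge a 2-element subset of V. *)
Section Graph.
Variable V : finType.

Definition eadj (A : {set {set V}}) : rel V := fun x y => [set x; y] \in A.

(* c(A): number of connected components of (V, A) (isolated vertices count) *)
Definition ncomp (A : {set {set V}}) : nat :=
  #|[set [set y | connect (eadj A) x y] | x : V]|.

Definition grank (A : {set {set V}}) : nat := (#|V| - ncomp A)%N.

Definition rho (R : realType) (A : {set {set V}}) : R := #|A|%:R / (grank A)%:R.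

Definition uniformly_dense (R : realType) (E : {set {set V}}) : Prop :=
  forall A : {set {set V}}, A \subset E -> A != set0 -> rho R A <= rho R E.

Definition vsupp (A : {set {set V}}) : {set V} := [set v | [exists e in A, v \in e]].

Definition bdry (E A : {set {set V}}) : {set {set V}} :=
  [set e in E :\: A | [exists v in e, v \in vsupp A]].

Definition gdeg (A : {set {set V}}) (v : V) : nat := #|[set e in A | v \in e]|.

(* lam is an eigenvalue of the normalized Laplacian of the graph with vertex
   set W and edge set A (functions f : W -> R, represented as f : V -> R whose
   values outside W are irrelevant):
   L f (v) = f v - (1/deg v) * sum_{u ~ v} f u = lam * f v for all v in W, f <> 0 on W. *)
Definition lap_eig (R : realType) (W : {set V}) (A : {set {set V}}) (lam : R) : Prop :=
  exists f : V -> R,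
    (exists2 v, v \in W & f v != 0) /\
    forall v, v \in W ->
      f v - (gdeg A v)%:R^-1 * (\sum_(u | eadj A u v) f u) = lam * f v.

Definition lap_max (R : realType) (W : {set V}) (A : {set {set V}}) (lam : R) : Prop :=
  lap_eig W A lam /\ forall mu, lap_eig W A mu -> mu <= lam.

End Graph.

(* Main.v *)
Require Import Defs.
From HB Require Import structures.
From mathcomp Require Import all_boot all_order all_algebra.
From mathcomp Require Import reals.
From mathcomp Require Import ring lra zify.
Import Order.TTheory GRing.Theory Num.Theory.
Local Open Scope ring_scope.

Module Ana.
From mathcomp Require Import all_classical all_reals topology normedtype derive.
Import numFieldNormedType.Exports.
Lemma cont_sum (T : topologicalType) (R : realType) (I : Type) (r : seq I)
  (P : pred I) (F : I -> T -> R) :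
  (forall i, continuous (F i)) -> continuous (fun x => \sum_(i <- r | P i) F i x).
Proof.
move=> cF; elim: r => [|i r IH].
  rewrite (_ : (fun x => _) = (fun _ => 0)); last by apply: funext => x; rewrite big_nil.
  by move=> x; exact: cst_continuous.
rewrite (_ : (fun x => _) = (fun x => if P i then F i x + \sum_(j <- r | P j) F j x
   else \sum_(j <- r | P j) F j x)); last by apply: funext => x; rewrite big_cons.
case: (P i) => // x.
exact: (@continuousD R R^o T (F i) (fun x => \sum_(j <- r | P j) F j x) x (cF i x) (IH x)).
Qed.

Lemma cont_mul (T : topologicalType) (R : realType) (f g : T -> R) :
  continuous f -> continuous g -> continuous (fun x => f x * g x).
Proof. by move=> cf cg x; exact: (@continuousM R T f g x (cf x) (cg x)). Qed.

Lemma cont_sq (T : topologicalType) (R : realType) (f : T -> R) :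
  continuous f -> continuous (fun x => f x ^+ 2).
Proof.
move=> cf; rewrite (_ : (fun x => _) = (fun x => f x * f x)); last first.
  by apply: funext => x; rewrite expr2.
exact: cont_mul.
Qed.

Lemma cont_sub (T : topologicalType) (R : realType) (f g : T -> R) :
  continuous f -> continuous g -> continuous (fun x => f x - g x).
Proof.
move=> cf cg x; exact: (@continuousD R R^o T f (fun x => - g x) x (cf x) (@continuousN R R^o T g x (cg x))).
Qed.
Lemma quad0 (R : realFieldType) (L K : R) : (forall t, t * L + t ^+ 2 * K <= 0) -> L = 0.
Proof.
move=> H; pose A := `|K| + 1.
have A0 : 0 < A by rewrite /A ltr_pwDr // normr_ge0.
pose s := L / A.
have Ls : L = s * A by rewrite /s divfK // gt_eqF.
have KA : 0 <= K + `|K| by have := ler_norm (- K); rewrite normrN; lra.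
have Hs : s * (s * A) + s ^+ 2 * K <= 0 by rewrite -Ls; exact: H.
clearbody s.
have E : s * (s * A) + s ^+ 2 * K = s ^+ 2 + s ^+ 2 * (K + `|K|) by rewrite /A; ring.
have P : 0 <= s ^+ 2 * (K + `|K|) by rewrite mulr_ge0 // sqr_ge0.
have s2 : s ^+ 2 <= 0 by rewrite E in Hs; lra.
have : s ^+ 2 = 0 by apply/eqP; rewrite eq_le s2 sqr_ge0.
by move/eqP; rewrite sqrf_eq0 Ls => /eqP ->; rewrite mul0r.
Qed.

Section Ray.
Variables (R : realType) (I : finType) (a : I -> I -> R) (d : I -> R) (W : {set I}).
Hypotheses (asym : forall u w, a u w = a w u) (age0 : forall u w, 0 <= a u w)
 (aW : forall u w, a u w != 0 -> u \in W) (dpos : forall v, v \in W -> 0 < d v).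

Definition Qf (f : I -> R) := \sum_u \sum_w a u w * (f u - f w) ^+ 2.
Definition Nf (f : I -> R) := \sum_(v in W) d v * f v ^+ 2.
Definition Bf (f g : I -> R) := \sum_u \sum_w a u w * ((f u - f w) * (g u - g w)).

Lemma Qf_ge0 f : 0 <= Qf f.
Proof. by apply: sumr_ge0 => u _; apply: sumr_ge0 => w _; rewrite mulr_ge0 // sqr_ge0. Qed.

Lemma Nf_ge0 f : 0 <= Nf f.
Proof. by apply: sumr_ge0 => v vW; rewrite mulr_ge0 ?sqr_ge0 // ltW // dpos. Qed.

Lemma QfZ c f : Qf (fun i => c * f i) = c ^+ 2 * Qf f.
Proof.
rewrite /Qf mulr_sumr; apply: eq_bigr => u _; rewrite mulr_sumr.
by apply: eq_bigr => w _; ring.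
Qed.

Lemma NfZ c f : Nf (fun i => c * f i) = c ^+ 2 * Nf f.
Proof. by rewrite /Nf mulr_sumr; apply: eq_bigr => u _; ring. Qed.

Definition restr (f : I -> R) := fun i => if i \in W then f i else 0.

Lemma Qf_restr f : Qf (restr f) = Qf f.
Proof.
apply: eq_bigr => u _; apply: eq_bigr => w _.
have [->|h] := eqVneq (a u w) 0; first by rewrite !mul0r.
have uW := aW _ _ h.
have wW : w \in W by apply: (aW _ u); rewrite asym.
by rewrite /restr uW wW.
Qed.

Lemma Nf_restr f : Nf (restr f) = Nf f.
Proof. by apply: eq_bigr => v vW; rewrite /restr vW. Qed.

Lemma Qf_exp f g t : Qf (fun i => f i + t * g i) = Qf f + t * (2 * Bf f g) + t ^+ 2 * Qf g.
Proof.
rewrite /Qf /Bf !mulr_sumr -!big_split /=; apply: eq_bigr => u _.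
rewrite !mulr_sumr -!big_split /=; apply: eq_bigr => w _ /=; ring.
Qed.

Lemma sum_delta (v : I) (X : I -> R) : \sum_u (u == v)%:R * X u = X v.
Proof.
rewrite (bigD1 v) //= eqxx mul1r big1 ?addr0 // => u /negbTE ->.
by rewrite mul0r.
Qed.

Lemma Bf_delta f v :
  Bf f (fun i => (i == v)%:R) = 2 * \sum_w a v w * (f v - f w).
Proof.
rewrite /Bf.
have -> : \sum_u \sum_w a u w * ((f u - f w) * ((u == v)%:R - (w == v)%:R)) =
  \sum_u (u == v)%:R * (\sum_w a u w * (f u - f w)) -
  \sum_u \sum_w (w == v)%:R * (a u w * (f u - f w)).
  rewrite -sumrB; apply: eq_bigr => u _; rewrite mulr_sumr -sumrB.
  by apply: eq_bigr => w _; ring.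
rewrite sum_delta exchange_big /=.
rewrite [X in _ - X](eq_bigr (fun j => (j == v)%:R * \sum_i a i j * (f i - f j))); last first.
  by move=> j _; rewrite mulr_sumr.
rewrite sum_delta.
have -> : \sum_u a u v * (f u - f v) = - \sum_w a v w * (f v - f w).
  by rewrite -sumrN; apply: eq_bigr => u _; rewrite asym; ring.
by rewrite opprK; ring.
Qed.

Lemma Nf_exp f v t : v \in W ->
  Nf (fun i => f i + t * (i == v)%:R) = Nf f + t * (2 * d v * f v) + t ^+ 2 * d v.
Proof.
move=> vW; rewrite /Nf (bigD1 v) //= [in RHS](bigD1 v) //= eqxx.
have -> : \sum_(i in W | i != v) d i * (f i + t * (i == v)%:R) ^+ 2 =
          \sum_(i in W | i != v) d i * f i ^+ 2.
  by apply: eq_bigr => i /andP[_ /negbTE ->]; rewrite mulr0 addr0.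
rewrite /= mulr1; ring.
Qed.


Lemma cont_add' (T : topologicalType) (f g : T -> R) :
  continuous f -> continuous g -> continuous (fun x => f x + g x).
Proof. move=> cf cg x; exact: (@continuousD R R^o T f g x (cf x) (cg x)). Qed.

Lemma rayleigh : (0 < #|W|)%N -> exists f0 : I -> R, exists mu : R,
  [/\ exists2 v, v \in W & f0 v != 0,
      forall v, v \in W -> \sum_w a v w * (f0 v - f0 w) = mu * d v * f0 v,
      0 <= mu & forall f, Qf f <= 2 * mu * Nf f].
Proof.
move=> /card_gt0P [v0 v0W].
pose n := #|I|.
pose F (x : 'rV[R]_n) : I -> R := fun i => x ord0 (enum_rank i).
have cF i : continuous (fun x : 'rV[R]_n => F x i).
  exact: (@coord_continuous R 1 n ord0 (enum_rank i)).
have cst (r : R) : continuous (fun _ : 'rV[R]_n => r) by move=> x; exact: cst_continuous.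
have cQ : continuous (fun x => Qf (F x)).
  rewrite /Qf; apply: cont_sum => u; apply: cont_sum => w; apply: cont_mul => //.
  by apply: cont_sq; apply: cont_sub.
have cN : continuous (fun x => Nf (F x)).
  rewrite /Nf; apply: cont_sum => u; apply: cont_mul => //.
  exact: cont_sq.
pose G x := (Nf (F x) - 1) ^+ 2 + \sum_(i | i \notin W) F x i ^+ 2.
have cG : continuous G.
  apply: cont_add'; first by apply: cont_sq; apply: cont_sub.
  by apply: cont_sum => i; apply: cont_sq.
pose S := (G @^-1` [set y : R | y = 0])%classic.
have SP x : S x <-> (Nf (F x) = 1 /\ forall i, i \notin W -> F x i = 0).
  rewrite /S /G /=; split.
    move=> /eqP; rewrite paddr_eq0 ?sqr_ge0 ?sumr_ge0 // => [/andP[h1 /eqP h2]|]; last first.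
      by move=> i _; rewrite sqr_ge0.
    split; first by move: h1; rewrite sqrf_eq0 subr_eq0 => /eqP.
    move=> i iW; apply/eqP; rewrite -sqrf_eq0; apply/eqP.
    by apply: (psumr_eq0P _ h2) => // j _; rewrite sqr_ge0.
  move=> [h1 h2]; rewrite h1 subrr expr0n /= add0r big1 // => i /h2 ->.
  by rewrite expr0n.
have clS : closed S.
  by apply: preimage_closed; [move=> x _; exact: cG | exact: closed_eq].
pose b (j : 'I_n) := 1 + `|d (enum_val j)|^-1.
have compS : compact S.
  apply: (subclosed_compact clS (@rV_compact _ n (fun j => `[- b j, b j]%classic)
     (fun j => @segment_compact R _ _))).
  move=> x /SP [hN hW] j /=.
  rewrite in_itv /= -ler_norml.
  have -> : x ord0 j = F x (enum_val j) by rewrite /F enum_valK.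
  rewrite /b; set i := enum_val j.
  case: (boolP (i \in W)) => iW; last first.
    by rewrite hW // normr0 addr_ge0 // invr_ge0.
  have h1 : d i * F x i ^+ 2 <= 1.
    rewrite -hN /Nf (bigD1 i) //= lerDl sumr_ge0 // => k /andP[kW _].
    by rewrite mulr_ge0 ?sqr_ge0 // ltW // dpos.
  have di := dpos _ iW.
  have h2 : F x i ^+ 2 <= (d i)^-1.
    have -> : F x i ^+ 2 = (d i)^-1 * (d i * F x i ^+ 2) by rewrite mulrA mulVf ?mul1r // gt_eqF.
    by rewrite -[leRHS]mulr1 ler_wpM2l // invr_ge0 ltW.
  rewrite (gtr0_norm di).
  have h3 : `|F x i| <= 1 + F x i ^+ 2.
    rewrite -real_normK ?num_real //; have := normr_ge0 (F x i); nra.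
  lra.
have S0 : (S !=set0)%classic.
  pose x0 : 'rV[R]_n := \row_j (if enum_val j == v0 then (Num.sqrt (d v0))^-1 else 0).
  have Fx0 i : F x0 i = if i == v0 then (Num.sqrt (d v0))^-1 else 0.
    by rewrite /F mxE enum_rankK.
  exists x0; apply/SP; split; last first.
    move=> i iW; rewrite Fx0; case: eqP => // ei; by rewrite ei v0W in iW.
  rewrite /Nf (bigD1 v0) //= Fx0 eqxx big1 ?addr0; last first.
    by move=> i /andP[_ /negbTE]; rewrite Fx0 => ->; rewrite expr0n /= mulr0.
  have dv0 := dpos _ v0W.
  by rewrite exprVn sqr_sqrtr ?ltW // mulfV // gt_eqF.
have [c cS cmax] := EVT_max_rV S0 compS (continuous_subspaceT cQ).
pose M := Qf (F c); pose f0 := F c.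
have [hN0 hW0] := (SP c).1 (set_mem cS).
have hA : forall f, Qf f <= M * Nf f.
  move=> f; rewrite -Qf_restr -Nf_restr; set f' := restr f.
  have f'W i : i \notin W -> f' i = 0 by move=> /negbTE; rewrite /f' /restr => ->.
  have [N0|Npos] : Nf f' = 0 \/ 0 < Nf f'.
    by have := Nf_ge0 f'; rewrite le_eqVlt => /orP[/eqP ->|->]; [left|right].
    have f'0 i : f' i = 0.
      case: (boolP (i \in W)) => iW; last exact: f'W.
      have h0 : d i * f' i ^+ 2 = 0.
        apply: (psumr_eq0P _ N0) => // j jW.
        by rewrite mulr_ge0 ?sqr_ge0 // ltW // dpos.
      move/eqP: h0; rewrite mulf_eq0 gt_eqF ?dpos //= sqrf_eq0 => /eqP //.
    rewrite N0 mulr0 /Qf big1 // => u _; rewrite big1 // => w _.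
    by rewrite !f'0 subrr expr0n /= mulr0.
  pose k := Num.sqrt (Nf f').
  have k0 : 0 < k by rewrite sqrtr_gt0.
  pose x : 'rV[R]_n := \row_j (k^-1 * f' (enum_val j)).
  have Fx : F x = (fun i => k^-1 * f' i).
    by apply: funext => i; rewrite /F mxE enum_rankK.
  have xS : x \in S.
    apply: mem_set; apply/SP; rewrite Fx NfZ; split.
      by rewrite exprVn sqr_sqrtr ?ltW // mulVf // gt_eqF.
    by move=> i iW; rewrite f'W // mulr0.
  have := cmax x xS; rewrite Fx QfZ -/M exprVn sqr_sqrtr ?(ltW Npos) // => h.
  have := ler_wpM2l (ltW Npos) h.
  by rewrite mulrA mulfV ?gt_eqF // mul1r mulrC.
have eig v : v \in W -> \sum_w a v w * (f0 v - f0 w) = (M / 2) * d v * f0 v.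
  move=> vW; set Sv := \sum_w _.
  pose dl := fun i : I => (i == v)%:R : R.
  have H t : t * (4 * Sv - 2 * M * d v * f0 v) + t ^+ 2 * (Qf dl - M * d v) <= 0.
    have := hA (fun i => f0 i + t * dl i).
    rewrite Qf_exp Bf_delta Nf_exp // hN0 -/M -/Sv -subr_le0 => h.
    apply: le_trans h; rewrite le_eqVlt; apply/orP; left; apply/eqP; ring.
  have /eqP := @quad0 R _ _ H; rewrite subr_eq0 => /eqP h'.
  have -> : M / 2 * d v * f0 v = (2 * M * d v * f0 v) / 4 by field.
  by rewrite -h'; field.
exists f0, (M / 2); split => //.
- case: (pickP [pred v | (v \in W) && (f0 v != 0)]) => [v /andP[]|H0]; first by exists v.
  exfalso; move: hN0; rewrite /Nf big1 => [/eqP|v vW]; first by rewrite eq_sym oner_eq0.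
  by move: (H0 v); rewrite /= vW /= => /negbFE/eqP; rewrite /f0 => ->; rewrite expr0n /= mulr0.
- by rewrite divr_ge0 ?Qf_ge0.
- by move=> f; have -> : 2 * (M / 2) = M by field.
Qed.

End Ray.
End Ana.
Set Implicit Arguments. Unset Strict Implicit.
Section Comb.
Variable V : finType.
Implicit Types (A B : {set {set V}}) (x y u w v : V).

Definition edges2 B := forall e, e \in B -> #|e| = 2%N.

Lemma eadj_sym B : symmetric (eadj B).
Proof. by move=> x y; rewrite /eadj setUC. Qed.

Lemma eadj_irr B x : edges2 B -> eadj B x x = false.
Proof.
move=> H; apply/negP => /H; by rewrite setUid cards1.
Qed.

Lemma eadj_vsupp B u w : eadj B u w -> u \in vsupp B.
Proof. by move=> h; rewrite inE; apply/existsP; exists [set u; w]; apply/andP; split; [exact: h | exact: set21]. Qed.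

Lemma edge_pair B e : edges2 B -> e \in B -> exists x y, x != y /\ e = [set x; y].
Proof. by move=> H /H /eqP /cards2P [x [y [xy ->]]]; exists x, y. Qed.

Lemma gdeg_nbr B v : edges2 B -> gdeg B v = #|[set w | eadj B v w]|.
Proof.
move=> H; rewrite /gdeg.
have -> : [set e in B | v \in e] = (fun w => [set v; w]) @: [set w | eadj B v w].
  apply/setP => e; apply/idP/imsetP.
    rewrite inE => /andP[eB ve].
    have [x [y [xy exy]]] := edge_pair H eB.
    rewrite exy in eB ve *; move: ve; rewrite !inE => /orP[]/eqP vx; subst v.
      by exists y => //; rewrite inE; exact: eB.
    by exists x; [rewrite inE /eadj setUC; exact: eB | rewrite setUC].
  by move=> [w]; rewrite inE /eadj => h ->; rewrite inE h set21.
rewrite card_in_imset // => w1 w2; rewrite !inE => h1 h2 e12.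
have : w1 \in [set v; w2] by rewrite -e12 set22.
rewrite !inE => /orP[]/eqP // w1v.
by move: h1; rewrite w1v eadj_irr.
Qed.

Lemma gdeg_pos B v : v \in vsupp B -> (0 < gdeg B v)%N.
Proof.
rewrite inE => /existsP [e /andP[eB ve]]; apply/card_gt0P; exists e.
by rewrite inE eB.
Qed.

Lemma sum_gdeg B : edges2 B -> (\sum_v gdeg B v = 2 * #|B|)%N.
Proof.
move=> H.
have -> : (\sum_v gdeg B v = \sum_v \sum_(e in B) (v \in e))%N.
  apply: eq_bigr => v _; rewrite /gdeg -sum1_card big_mkcond /=.
  rewrite [in RHS]big_mkcond /=; apply: eq_bigr => e _.
  by rewrite inE; case: (e \in B); case: (v \in e).
rewrite exchange_big /= -sum1_card big_distrr /=.
apply: eq_big => // e eB; rewrite muln1 -(H e eB) -sum1_card big_mkcond /=.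
by rewrite [RHS]big_mkcond; apply: eq_bigr => v _; case: (v \in e).
Qed.


Definition cls A x := [set y | connect (eadj A) x y].

Lemma ncompE A : ncomp A = #|[set cls A x | x : V]|.
Proof. by []. Qed.

Lemma csym A : connect_sym (eadj A).
Proof. exact: sym_connect_sym (eadj_sym A). Qed.

Lemma cls_eq A u w : (cls A u == cls A w) = connect (eadj A) u w.
Proof.
apply/eqP/idP => [h|h].
  have : w \in cls A w by rewrite inE connect0.
  by rewrite -h inE.
by apply/setP => z; rewrite !inE (same_connect (csym A) h).
Qed.

Lemma factor_card (T1 T2 : finType) (f1 : V -> T1) (f2 : V -> T2) :
  (forall u w, f1 u = f1 w -> f2 u = f2 w) ->
  (#|[set f2 x | x : V]| <= #|[set f1 x | x : V]|)%N.
Proof.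
move=> H; pose k c := omap f2 [pick v | f1 v == c].
have hk u : k (f1 u) = Some (f2 u).
  rewrite /k; case: pickP => [v /eqP h|/(_ u)]; first by rewrite /= (H _ _ h).
  by rewrite eqxx.
have -> : #|[set f2 x | x : V]| = #|[set Some (f2 x) | x : V]|.
  by rewrite (imset_comp Some f2) card_imset //; exact: Some_inj.
rewrite (eq_imset _ (fun u => esym (hk u))) (imset_comp k f1).
exact: leq_imset_card.
Qed.

Lemma ncomp_le A : (ncomp A <= #|V|)%N.
Proof. exact: leq_imset_card. Qed.

Lemma ncomp_add A A' x y :
  (forall f, f \in A -> f \in A' \/ f = [set x; y]) ->
  (ncomp A' <= ncomp A + ~~ connect (eadj A') x y)%N.
Proof.
move=> hA; pose g v := if connect (eadj A') y v then x else v.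
have gxy a : a \in [set x; y] -> g a = x.
  by rewrite !inE /g => /orP[]/eqP ->; [case: ifP | rewrite connect0].
have step a b : eadj A a b -> connect (eadj A') (g a) (g b).
  move=> /hA [h|h].
    have cab : connect (eadj A') a b := connect1 h.
    have E : connect (eadj A') y a = connect (eadj A') y b.
      by rewrite (csym A' y a) (csym A' y b) (same_connect (csym A') cab).
    by rewrite /g E; case: ifP => _; [exact: connect0 | exact: cab].
  rewrite !gxy ?connect0 //; rewrite -h ?set21 ?set22 //.
have conn u w : connect (eadj A) u w -> connect (eadj A') (g u) (g w).
  move/connectP => [p pth ->]; elim: p u pth => [|z p IH] u /=.
    by move=> _; exact: connect0.
  by move=> /andP[h pth]; apply: connect_trans (step _ _ h) (IH _ pth).
have H1 : (#|[set cls A' (g v) | v : V]| <= ncomp A)%N.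
  rewrite ncompE; apply: factor_card => u w /eqP; rewrite cls_eq => /conn.
  by rewrite -cls_eq => /eqP.
rewrite ncompE; case: (boolP (connect (eadj A') x y)) => cxy /=.
  rewrite addn0; apply: leq_trans H1; apply: subset_leq_card.
  apply/subsetP => c /imsetP [v _ ->]; apply/imsetP; exists v => //.
  rewrite /g; case: ifP => // yv; apply/eqP; rewrite cls_eq.
  by rewrite csym (connect_trans cxy yv).
apply: leq_trans (_ : #|cls A' y |: [set cls A' (g v) | v : V]| <= _)%N.
  apply: subset_leq_card; apply/subsetP => c /imsetP [v _ ->].
  rewrite !inE; case yv : (connect (eadj A') y v).
    by apply/orP; left; rewrite cls_eq csym yv.
  by apply/orP; right; apply/imsetP; exists v => //; rewrite /g yv.
by rewrite cardsU1 addnC; apply: leq_add H1 (leq_b1 _).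
Qed.


Definition bichrom (s : V -> bool) (e : {set V}) :=
  [exists u in e, [exists w in e, s u != s w]].
Definition cnt (s : V -> bool) A := #|[set e in A | bichrom s e]|.

Lemma edge_eq B e u w : edges2 B -> e \in B -> u \in e -> w \in e -> u != w ->
  e = [set u; w].
Proof.
move=> H eB ue we uw; apply/esym/eqP; rewrite eqEcard cards2 uw (H e eB) /= andbT.
by apply/subsetP => z; rewrite !inE => /orP[]/eqP ->.
Qed.

Lemma in_edge_connect B e u w : edges2 B -> e \in B -> u \in e -> w \in e ->
  connect (eadj B) u w.
Proof.
move=> H eB ue we; case: (eqVneq u w) => [->|uw]; first exact: connect0.
by apply: connect1; rewrite /eadj -(edge_eq H eB ue we uw).
Qed.

Lemma ncomp0 : ncomp (set0 : {set {set V}}) = #|V|.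
Proof.
rewrite ncompE card_imset //.
move=> u w /eqP; rewrite cls_eq => /connectP [[|z p] /=]; first by move=> _ ->.
by rewrite /eadj in_set0.
Qed.

Lemma color A : edges2 A -> exists s, (grank A <= cnt s A)%N.
Proof.
have [k] := ubnP #|A|; elim: k A => // k IH A ltA HA.
case: (set_0Vmem A) => [->|[e eA]].
  by exists (fun _ => true); rewrite /grank ncomp0 subnn.
set A' := A :\ e.
have ltA' : (#|A'| < k)%N.
  by move: ltA; rewrite (cardsD1 e A) eA add1n ltnS; apply: leq_trans.
have HA' : edges2 A' by move=> f; rewrite inE => /andP[_ /HA].
have [s' hs'] := IH A' ltA' HA'.
have [x [y [xy exy]]] := edge_pair HA eA.
have hA f : f \in A -> f \in A' \/ f = [set x; y].
  by move=> fA; case: (eqVneq f e) => [->|fe]; [right | left; rewrite !inE fe].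
have hnc := ncomp_add hA.
have ncA := ncomp_le A; have ncA' := ncomp_le A'.
case: (boolP (connect (eadj A') x y)) => cxy.
  exists s'; rewrite /grank; move: hnc; rewrite cxy addn0 => hnc.
  apply: leq_trans (_ : #|V| - ncomp A' <= _)%N; first by rewrite leq_sub2l.
  apply: leq_trans hs' _; apply: subset_leq_card; apply/subsetP => f.
  by rewrite !inE => /andP[/andP[_ ->] ->].
pose flip := s' x == s' y.
pose s v := s' v (+) (flip && connect (eadj A') y v).
exists s.
have nyx : connect (eadj A') y x = false by rewrite csym; apply/negbTE.
have bi_e : bichrom s e.
  apply/existsP; exists x; rewrite exy set21 /=; apply/existsP; exists y.
  rewrite set22 /= /s nyx connect0 andbF andbT addbF /flip.
  by case: (s' x); case: (s' y).
have pres f : f \in A' -> bichrom s' f -> bichrom s f.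
  move=> fA /existsP [u /andP[uf /existsP [w /andP[wf suw]]]].
  have cuw := in_edge_connect HA' fA uf wf.
  have E : connect (eadj A') y u = connect (eadj A') y w.
    by rewrite (csym A' y u) (csym A' y w) (same_connect (csym A') cuw).
  apply/existsP; exists u; rewrite uf /=; apply/existsP; exists w; rewrite wf /=.
  rewrite /s E; case: (_ && _); rewrite ?addbT ?addbF //.
  by move: suw; case: (s' u); case: (s' w).
have eA' : e \notin [set f in A' | bichrom s' f] by rewrite !inE eqxx.
have hcnt : (cnt s' A' + 1 <= cnt s A)%N.
  have C : #|e |: [set f in A' | bichrom s' f]| = (cnt s' A' + 1)%N.
    by rewrite cardsU1 eA' addnC.
  rewrite -C.
  apply: subset_leq_card; apply/subsetP => f; rewrite !inE.
  case/orP => [/eqP ->|]; first by rewrite eA bi_e.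
  by move=> /andP[/andP[fe fA] bf]; rewrite fA /= pres // !inE fe fA.
move: hnc; rewrite cxy /= => hnc.
rewrite /grank in hs' *; lia.
Qed.

End Comb.
Set Implicit Arguments. Unset Strict Implicit.

Section Bridge.
Variables (R : realType) (V : finType).
Implicit Types (A B C : {set {set V}}) (s : V -> bool) (u w v : V).

Definition aB B := fun u w : V => ((eadj B u w)%:R : R).
Definition dB B := fun v : V => ((gdeg B v)%:R : R).
Definition QQ B f := Ana.Qf R V (aB B) f.
Definition NN B f := Ana.Nf R V (dB B) (vsupp B) f.

Lemma aB_sym B u w : aB B u w = aB B w u.
Proof. by rewrite /aB eadj_sym. Qed.

Lemma aB_ge0 B u w : 0 <= aB B u w.
Proof. exact: ler0n. Qed.

Lemma aB_W B u w : aB B u w != 0 -> u \in vsupp B.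
Proof. rewrite /aB; case h : (eadj B u w); [move=> _; exact: (eadj_vsupp h) | by rewrite eqxx]. Qed.

Lemma dB_pos B v : v \in vsupp B -> 0 < dB B v.
Proof. by move=> /gdeg_pos; rewrite /dB ltr0n. Qed.

Lemma sum_aB B v : edges2 B -> \sum_w aB B v w = dB B v.
Proof.
move=> H; rewrite /dB gdeg_nbr // -sum1_card natr_sum [RHS]big_mkcond /=.
by apply: eq_bigr => w _; rewrite inE /aB; case: (eadj B v w).
Qed.

Lemma vsupp_gt0 B : edges2 B -> B != set0 -> (0 < #|vsupp B|)%N.
Proof.
move=> H /set0Pn [e eB]; have [x [y [xy exy]]] := edge_pair H eB.
apply/card_gt0P; exists x; rewrite inE; apply/existsP; exists e.
by rewrite eB exy set21.
Qed.

Lemma lapQ B lam : edges2 B -> B != set0 -> lap_max (vsupp B) B lam ->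
  0 <= lam /\ forall f, QQ B f <= 2 * lam * NN B f.
Proof.
move=> H B0 [_ lmax].
have [f0 [mu [[v vW fv] eig mu0 hQ]]] := @Ana.rayleigh R V (aB B) (dB B) (vsupp B)
  (@aB_sym B) (@aB_ge0 B) (@aB_W B) (@dB_pos B) (vsupp_gt0 H B0).
have le : mu <= lam.
  apply: lmax; exists f0; split; first by exists v.
  move=> u uW; have := eig u uW.
  have sa : \sum_w aB B u w * (f0 u - f0 w) =
            dB B u * f0 u - \sum_(w | eadj B w u) f0 w.
    rewrite -(sum_aB u H) mulr_suml [X in _ = _ - X]big_mkcond -sumrB /=.
    apply: eq_bigr => w _; rewrite /aB [eadj B w u]eadj_sym; case: (eadj B u w) => /=; [by rewrite !mul1r | by rewrite !mul0r subr0].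
  rewrite sa => hS.
  have dne : dB B u != 0 by rewrite gt_eqF // dB_pos.
  have -> : \sum_(w | eadj B w u) f0 w = dB B u * f0 u - mu * dB B u * f0 u.
    by rewrite -hS; ring.
  rewrite -/(dB B u); field; exact: dne.
split; first exact: le_trans mu0 le.
move=> f; apply: le_trans (hQ f) _.
apply: ler_wpM2r; first exact: Ana.Nf_ge0 (@dB_pos B) f.
by rewrite ler_wpM2l.
Qed.


Lemma grank_pos A : edges2 A -> A != set0 -> (0 < grank A)%N.
Proof.
move=> H /set0Pn [e eA]; have [x [y [xy exy]]] := edge_pair H eA.
have cxy : connect (eadj A) x y by apply: connect1; rewrite /eadj -exy.
have le1 : (ncomp A <= #|[set~ y]|)%N.
  rewrite ncompE; apply: leq_trans (leq_imset_card (cls A) _).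
  apply: subset_leq_card; apply/subsetP => c /imsetP [v _ ->].
  apply/imsetP; case: (eqVneq v y) => [->|vy].
    by exists x; [rewrite !inE | apply/eqP; rewrite cls_eq csym].
  by exists v; rewrite ?inE.
move: le1; rewrite cardsC1 /grank.
have : (0 < #|V|)%N by apply/card_gt0P; exists x.
lia.
Qed.

Definition fv (s : V -> bool) A := fun v : V =>
  if v \in vsupp A then (if s v then 1 else -1) else (0 : R).

Lemma bichrom2 s u w : bichrom s [set u; w] -> s u != s w.
Proof.
move=> /existsP [p /andP[pin /existsP [q /andP[qin spq]]]].
by move: pin qin spq; rewrite !inE => /orP[]/eqP -> /orP[]/eqP ->;
  rewrite ?eqxx // eq_sym.
Qed.

Lemma Q_lower B A s : edges2 B -> A \subset B ->
  8 * (cnt s A)%:R <= QQ B (fv s A).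
Proof.
move=> HB AB; pose A2 := [set e in A | bichrom s e].
have HA2 : edges2 A2.
  by move=> e; rewrite inE => /andP[eA _]; apply: HB; apply: (subsetP AB).
have -> : 8 * (cnt s A)%:R = \sum_u \sum_w aB A2 u w * 4.
  rewrite (eq_bigr (fun u => dB A2 u * 4)); last first.
    by move=> u _; rewrite -mulr_suml sum_aB.
  rewrite -mulr_suml /dB -natr_sum sum_gdeg // natrM /cnt -/A2; ring.
apply: ler_sum => u _; apply: ler_sum => w _.
rewrite /aB; case h : (eadj A2 u w); last by rewrite mul0r mulr_ge0 ?ler0n ?sqr_ge0.
move: (h); rewrite /eadj inE => /andP[eA bi].
have uA : u \in vsupp A by apply: (@eadj_vsupp _ _ u w).
have wA : w \in vsupp A by apply: (@eadj_vsupp _ _ w u); rewrite eadj_sym.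
have hB : ([set u; w] \in B) = true := subsetP AB _ eA.
rewrite hB /fv uA wA /= !mul1r.
have := bichrom2 bi.
by case: (s u); case: (s w) => // _; rewrite expr2; lra.
Qed.

Lemma N_upper B A C s : (forall v, v \in vsupp A -> gdeg B v <= gdeg C v)%N ->
  NN B (fv s A) <= (\sum_v gdeg C v)%:R.
Proof.
move=> H; rewrite natr_sum /NN /Ana.Nf.
apply: le_trans (_ : \sum_v dB B v * fv s A v ^+ 2 <= _).
  rewrite [X in _ <= X](bigID (fun v => v \in vsupp B)) /= lerDl.
  by apply: sumr_ge0 => v _; rewrite mulr_ge0 ?ler0n ?sqr_ge0.
apply: ler_sum => v _; rewrite /fv; case: ifP => vA.
  have -> : (if s v then 1 else -1) ^+ 2 = 1 :> R by case: (s v); rewrite ?expr1n ?sqrrN ?expr1n.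
  by rewrite mulr1 /dB ler_nat H.
by rewrite expr0n /= mulr0 ler0n.
Qed.

End Bridge.

Lemma part2 (R : realType) (V : finType) (E : {set {set V}})
  (Hsimple : forall e, e \in E -> #|e| = 2%N)
  (Hedge : E != set0)
  (Hnoiso : forall v : V, exists2 e, e \in E & v \in e) :
  (forall (A : {set {set V}}) (lam : R), A \subset E -> A != set0 ->
     lap_max [set: V] E lam ->
     2 / rho R A * (#|A|%:R / (#|A| + #|bdry E A|)%:R) <= lam).
Proof.
move=> A lam AE A0 Hl.
have HE : edges2 E := Hsimple.
have vsE : vsupp E = [set: V].
  apply/setP => v; rewrite !inE; have [e eE ve] := Hnoiso v.
  by apply/existsP; exists e; rewrite eE.
rewrite -vsE in Hl.
have [lam0 hQ] := lapQ HE Hedge Hl.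
have HA : edges2 A by move=> e eA; apply: HE; apply: (subsetP AE).
have [s hs] := color HA.
pose C := A :|: bdry E A.
have CE : C \subset E.
  by apply/subsetP => e; rewrite !inE => /orP[/(subsetP AE)|/andP[/andP[_ ->]]].
have HC : edges2 C by move=> e eC; apply: HE; apply: (subsetP CE).
have h1 := Q_lower R s HE AE.
have h2 : NN (R:=R) E (fv R s A) <= (2 * (#|A| + #|bdry E A|))%:R.
  apply: le_trans (@N_upper R V E A C s _) _.
    move=> v vA; apply: subset_leq_card; apply/subsetP => e.
    rewrite !inE => /andP[eE ve]; case eA : (e \in A) => //=.
    by rewrite eE ve andbT /=; apply/existsP; exists v; rewrite ve vA.
  by rewrite sum_gdeg // ler_nat leq_mul2l cardsU leq_subr orbT.
have h3 := hQ (fv R s A).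
have hr : ((grank A)%:R : R) <= (cnt s A)%:R by rewrite ler_nat.
have a0 : (0 < #|A|)%N by rewrite card_gt0.
have D0 : (0 < #|A| + #|bdry E A|)%N by rewrite addn_gt0 a0.
have -> : 2 / rho R A * (#|A|%:R / (#|A| + #|bdry E A|)%:R) =
          2 * (grank A)%:R / (#|A| + #|bdry E A|)%:R.
  rewrite /rho invf_div; field; by rewrite -natrD !pnatr_eq0 -!lt0n D0 a0.
rewrite ler_pdivrMr ?ltr0n //.
have h4 : lam * NN (R:=R) E (fv R s A) <= lam * (2 * (#|A| + #|bdry E A|))%:R.
  exact: ler_wpM2l.
move: h4; rewrite natrM => h4.
nra.
Qed.

Unset Implicit Arguments.
Set Strict Implicit.
Theorem theorem3p16 (R : realType) (V : finType) (E : {set {set V}})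
  (Hsimple : forall e, e \in E -> #|e| = 2%N)
  (Hedge : E != set0)
  (Hnoiso : forall v : V, exists2 e, e \in E & v \in e) :
  (forall lam : R, lap_max [set: V] E lam -> 2 / rho R E <= lam) /\
  (forall (A : {set {set V}}) (lam : R), A \subset E -> A != set0 ->
     lap_max [set: V] E lam ->
     2 / rho R A * (#|A|%:R / (#|A| + #|bdry E A|)%:R) <= lam) /\
  (uniformly_dense R E ->
   forall (A : {set {set V}}) (lam : R), A \subset E -> A != set0 ->
     lap_max (vsupp A) A lam -> 2 / rho R E <= lam).
Proof.
have P2 := @part2 R V E Hsimple Hedge Hnoiso.
split; [|split => //].
  move=> lam Hl; have := P2 E lam (subxx E) Hedge Hl.
  have -> : bdry E E = set0.
    by apply/setP => e; rewrite !inE; case: (e \in E); rewrite ?andbF.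
  rewrite cards0 addn0 divff ?mulr1 // pnatr_eq0 -lt0n card_gt0 //.
move=> ud A lam AE A0 Hl.
have HE : edges2 E := Hsimple.
have HA : edges2 A by move=> e eA; apply: HE; apply: (subsetP AE).
have [lam0 hQ] := lapQ HA A0 Hl.
have [s hs] := color HA.
have h1 := Q_lower R s HA (subxx A).
have h2 : NN (R:=R) A (fv R s A) <= (2 * #|A|)%:R.
  by rewrite -sum_gdeg //; apply: (@N_upper R V A A A s).
have h3 := hQ (fv R s A).
have hr : ((grank A)%:R : R) <= (cnt s A)%:R by rewrite ler_nat.
have a0 : (0 < #|A|)%N by rewrite card_gt0.
have r0 : (0 < grank A)%N := grank_pos HA A0.
have h4 : lam * NN (R:=R) A (fv R s A) <= lam * (2 * #|A|)%:R.
  exact: ler_wpM2l.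
have hA : 2 / rho R A <= lam.
  have -> : 2 / rho R A = 2 * (grank A)%:R / #|A|%:R.
    by rewrite /rho invf_div mulrA.
  rewrite ler_pdivrMr ?ltr0n //.
  move: h4; rewrite natrM => h4; nra.
have rA0 : 0 < rho R A by rewrite /rho divr_gt0 ?ltr0n.
have rAE := ud A AE A0.
apply: le_trans hA.
rewrite ler_wpM2l // lef_pV2 ?posrE //.
exact: lt_le_trans rAE.
Qed.
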